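(* Let $G$ be a simple (prop-int, tree)-graph, let $v$ be a pendant vertex of $G$ (a vertex of degree exactly $1$), and let $\widehat{G}$ be obtained from $G$ by attaching a degree-2-tail of length $\ell\ge 1$ at $v$, i.e., adding new vertices $u_1,\dots,u_\ell$ and edges $vu_1$ and $u_iu_{i+1}$ for $1\le i\le \ell-1$. Then $\widehat{G}$ is a simple (prop-int, tree)-graph.
   Context: A simple undirected graph is a (prop-int, tree)-graph if every connected component of it is a proper interval graph or a tree. *)

(* Defs.v *)
From Stdlib Require Import Reals.
From mathcomp Require Import all_boot.
Set Implicit Arguments. Unset Strict Implicit. Unset Printing Implicit Defensive.

Definition simple_graph (T : finType) (e : rel T) : Prop :=
  symmetric e /\ irreflexive e.

Definition component (T : finType) (e : rel T) (x : T) : {set T} :=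
  [set y | connect e x y].

Definition induced (T : finType) (e : rel T) (C : {set T}) : rel T :=
  [rel x y | [&& x \in C, y \in C & e x y]].

Definition proper_interval_on (T : finType) (e : rel T) (C : {set T}) : Prop :=
  exists a b : T -> R,
    (forall x, x \in C -> Rle (a x) (b x)) /\
    (forall x y, x \in C -> y \in C -> x != y ->
       (e x y <-> Rle (Rmax (a x) (a y)) (Rmin (b x) (b y)))) /\
    (forall x y, x \in C -> y \in C ->
       ~ (Rle (a y) (a x) /\ Rle (b x) (b y) /\ (a x <> a y \/ b x <> b y))).

Definition has_cycle_on (T : finType) (e : rel T) (C : {set T}) : Prop :=
  exists c : seq T, [/\ 3 <= size c, uniq c, all (fun x => x \in C) c
                       & cycle e c].

Definition tree_on (T : finType) (e : rel T) (C : {set T}) : Prop :=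
  (forall x y, x \in C -> y \in C -> connect (induced e C) x y) /\
  ~ has_cycle_on e C.

Definition prop_int_tree (T : finType) (e : rel T) : Prop :=
  forall x : T, proper_interval_on e (component e x) \/ tree_on e (component e x).

(* Attaching a tail of length l at v: new vertices inr i (i < l), where
   inr i represents u_{i+1}; edges v u_1 and u_i u_{i+1}. *)
Definition tail_rel (T : finType) (e : rel T) (v : T) (l : nat)
  : rel (T + 'I_l) :=
  fun p q =>
    match p, q with
    | inl x, inl y => e x y
    | inl x, inr j => (x == v) && (val j == 0)
    | inr i, inl y => (y == v) && (val i == 0)
    | inr i, inr j => ((val i).+1 == val j) || ((val j).+1 == val i)
    end.
Arguments tail_rel {T} e v l.

(* Main.v *)
Require Import Defs.
From Stdlib Require Import Reals Lra Lia.
From mathcomp Require Import all_boot zify.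
Set Implicit Arguments. Unset Strict Implicit. Unset Printing Implicit Defensive.

Lemma RmaxminE (p q r s : R) : Rle (Rmax p q) (Rmin r s) <->
  (Rle p r /\ Rle p s /\ Rle q r /\ Rle q s).
Proof.
unfold Rmax, Rmin; destruct (Rle_dec p q); destruct (Rle_dec r s);
  split; [intros H; repeat split; lra | intros (H1&H2&H3&H4); lra
         |intros H; repeat split; lra | intros (H1&H2&H3&H4); lra
         |intros H; repeat split; lra | intros (H1&H2&H3&H4); lra
         |intros H; repeat split; lra | intros (H1&H2&H3&H4); lra].
Qed.

Lemma conn_ind (T : finType) (e : rel T) (P : T -> Prop) x :
  P x -> (forall y z, connect e x y -> e y z -> P y -> P z) ->
  forall y, connect e x y -> P y.
Proof.
move=> Px H y /connectP [p pth ->].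
suff: forall u, connect e x u -> P u -> path e u p -> P (last u p).
  by move=> K; apply: K => //; exact: connect0.
elim: p {pth} => [|z p IH] u cu Pu //= /andP [euz pz].
apply: IH pz; first exact: connect_trans cu (connect1 euz).
exact: H cu euz Pu.
Qed.

Lemma connect_mapw (T1 T2 : finType) (r1 : rel T1) (r2 : rel T2) (f : T1 -> T2) :
  (forall p q, r1 p q -> connect r2 (f p) (f q)) ->
  forall p q, connect r1 p q -> connect r2 (f p) (f q).
Proof.
move=> H p q /connectP [s pth ->].
elim: s p pth => [|z s IH] p /=; first by move=> _; exact: connect0.
by case/andP => h hs; exact: connect_trans (H _ _ h) (IH _ hs).
Qed.

Lemma induced_sym (T : finType) (e : rel T) C : symmetric e -> symmetric (induced e C).
Proof. by move=> se x y; rewrite /induced /= se andbCA. Qed.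

Lemma comp_connected (T : finType) (e : rel T) x : symmetric e ->
  forall p q, p \in component e x -> q \in component e x ->
  connect (induced e (component e x)) p q.
Proof.
move=> se.
have G : forall y, connect e x y -> connect (induced e (component e x)) x y.
  move=> y cxy.
  apply: (conn_ind (P := fun y => connect (induced e (component e x)) x y) _ _ cxy).
    exact: connect0.
  move=> u z cu euz IH.
  apply: connect_trans IH (connect1 _).
  by rewrite /induced /= !inE cu (connect_trans cu (connect1 euz)) euz.
move=> p q; rewrite !inE => hp hq.
have sI := sym_connect_sym (induced_sym (component e x) se).
by apply: connect_trans (G _ hq); rewrite sI; exact: G.
Qed.

Definition rep (T : finType) (e : rel T) (C : {set T}) (a b : T -> R) : Prop :=
    (forall x, x \in C -> Rle (a x) (b x)) /\
    (forall x y, x \in C -> y \in C -> x != y ->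
       (e x y <-> Rle (Rmax (a x) (a y)) (Rmin (b x) (b y)))) /\
    (forall x y, x \in C -> y \in C ->
       ~ (Rle (a y) (a x) /\ Rle (b x) (b y) /\ (a x <> a y \/ b x <> b y))).

Lemma rep_refl (T : finType) (e : rel T) C a b : rep e C a b ->
  rep e C (fun x => Ropp (b x)) (fun x => Ropp (a x)).
Proof.
move=> [h1 [h2 h3]]; split; [|split].
- move=> x xC; have := h1 x xC; lra.
- move=> x y xC yC nxy; have [H1 H2] := h2 x y xC yC nxy.
  rewrite !RmaxminE in H1 H2 *.
  split => H.
  + have [?[?[??]]] := H1 H; repeat split; lra.
  + case: H => [?[?[??]]]; apply: H2; repeat split; lra.
- move=> x y xC yC [H1 [H2 H3]]; apply: (h3 x y xC yC); split; [lra|split; [lra|]].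
  case: H3 => H; [right|left]; intro; apply: H; lra.
Qed.

Definition prj (T : finType) (v : T) (l : nat) (p : T + 'I_l) : T :=
  match p with inl x => x | inr _ => v end.
Arguments prj {T} v {l} p.

Lemma tail_sym (T : finType) (e : rel T) v l : symmetric e -> symmetric (tail_rel e v l).
Proof. by move=> se [x|i] [y|j] //=; rewrite ?se // orbC. Qed.

Lemma tail_simple (T : finType) (e : rel T) v l : simple_graph e -> simple_graph (tail_rel e v l).
Proof.
case=> se ie; split; first exact: tail_sym.
case=> [x|i] /=; first exact: ie.
by rewrite orbb eq_sym (ltn_eqF (ltnSn _)).
Qed.

Lemma tail_conn_v (T : finType) (e : rel T) v l (i : 'I_l) :
  connect (tail_rel e v l) (inl v) (inr i).
Proof.
case: i => k; elim: k => [|k IH] Hk.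
  by apply: connect1; rewrite /= eqxx.
apply: connect_trans (IH (ltnW Hk)) (connect1 _).
by rewrite /= eqxx.
Qed.

Lemma tail_connect (T : finType) (e : rel T) v l : symmetric e ->
  forall p q, connect (tail_rel e v l) p q = connect e (prj v p) (prj v q).
Proof.
move=> se p q; apply/idP/idP.
- apply: connect_mapw => {p q} [[x|i] [y|j]] /=.
  + exact: connect1.
  + by case/andP => /eqP -> _; exact: connect0.
  + by case/andP => /eqP -> _; exact: connect0.
  + by move=> _; exact: connect0.
- move=> h.
  have sE := sym_connect_sym (@tail_sym _ e v l se).
  have hp : connect (tail_rel e v l) p (inl (prj v p)).
    case: p {h} => [x|i] /=; first exact: connect0.
    by rewrite sE; exact: tail_conn_v.
  have hq : connect (tail_rel e v l) (inl (prj v q)) q.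
    case: q {h hp} => [y|j] /=; first exact: connect0.
    exact: tail_conn_v.
  apply: connect_trans hp (connect_trans _ hq).
  by apply: (@connect_mapw _ _ e (tail_rel e v l) inl _ _ _ h) => x y exy; apply: connect1.
Qed.

Lemma tail_component (T : finType) (e : rel T) v l x : symmetric e ->
  component (tail_rel e v l) x = [set q | prj v q \in component e (prj v x)].
Proof. by move=> se; apply/setP => q; rewrite !inE tail_connect. Qed.

Definition isr (A B : Type) (p : A + B) : bool := if p is inr _ then true else false.

Lemma path_pi (T : finType) (e : rel T) v l x s :
  all (fun p => ~~ isr p) (x :: s) -> path (tail_rel e v l) x s ->
  path e (prj v x) (map (prj v) s).
Proof.
elim: s x => [|y s IH] x //= /and3P [hx hy hs] /andP [h hp]; apply/andP; split.
  by case: x y hx hy h {IH hs hp} => [x|i] [y|j].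
by apply: IH => //=; rewrite hy.
Qed.

Lemma tail_acyclic (T : finType) (e : rel T) v l (C : {set T}) : symmetric e ->
  ~ has_cycle_on e C -> ~ has_cycle_on (tail_rel e v l) [set q | prj v q \in C].
Proof.
move=> se nc [c [sz uc allc cyc]].
have [hr|hnr] := boolP (has (@isr _ _) c).
- case/hasP: hr => p0 p0c.
  case: p0 p0c => [x0|j0] // j0c _.
  case: (@arg_maxnP _ j0 (fun j => inr j \in c) val j0c) => i ic imax.
  have imax' : forall j, inr j \in c -> nat_of_ord j <= nat_of_ord i by move=> j /imax.
  case: (rot_to ic) => n s' rotc.
  have uc' : uniq (inr i :: s') by rewrite -rotc rot_uniq.
  have cyc' : cycle (tail_rel e v l) (inr i :: s') by rewrite -rotc rot_cycle.
  have sz' : 3 <= size (inr i :: s') by rewrite -rotc size_rot.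
  have mem' : forall q, q \in s' -> q \in c.
    by move=> q hq; rewrite -(mem_rot n) rotc inE hq orbT.
  have nb : forall q1 q2, q1 \in c -> q2 \in c -> tail_rel e v l (inr i) q1 ->
      tail_rel e v l (inr i) q2 -> q1 = q2.
    move=> [x1|j1] [x2|j2] h1 h2 /=.
    + by case/andP => /eqP -> _ /andP [/eqP -> _].
    + case/andP => _ /eqP i0 /orP [] /eqP h; exfalso.
      * have := imax' _ h2; lia.
      * lia.
    + move=> /orP [] /eqP h; case/andP => _ /eqP i0; exfalso.
      * have := imax' _ h1; lia.
      * lia.
    + move=> /orP [] /eqP ha /orP [] /eqP hb.
      * exfalso; have := imax' _ h1; lia.
      * exfalso; have := imax' _ h1; lia.
      * exfalso; have := imax' _ h2; lia.
      * by congr inr; apply: ord_inj; lia.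
  case: s' rotc uc' cyc' sz' mem' => [|y s1] // _ uc' cyc' sz' mem'.
  case/lastP: s1 uc' cyc' sz' mem' => [|s2 z] // uc' cyc' _ mem'.
  move: cyc'; rewrite /= rcons_path last_rcons => /and3P [eiy _ ezi].
  have yz : y = z.
    apply: nb.
    - by apply: mem'; rewrite inE eqxx.
    - by apply: mem'; rewrite inE mem_rcons inE eqxx orbT.
    - exact: eiy.
    - by rewrite tail_sym.
  by move: uc'; rewrite yz /= mem_rcons inE eqxx /= andbF.
- apply: nc; exists (map (prj v) c).
  have allc' : all (fun p => ~~ isr p) c by rewrite -all_predC in hnr.
  split.
  + by rewrite size_map.
  + rewrite map_inj_in_uniq // => p q pc qc.
    move: (allP allc' p pc) (allP allc' q qc).
    by case: p {pc} => [x|i] // _; case: q {qc} => [y|j] //= _ ->.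
  + apply/allP => x /mapP [p pc ->]; have := allP allc p pc; by rewrite inE.
  + case: c {sz uc allc hnr} cyc allc' => [|x s] //= cyc allc'.
    rewrite -map_rcons; apply: path_pi => //.
    by rewrite /= all_rcons; case/andP: allc' => -> ->.
Qed.

Lemma tail_proper_far (T : finType) (e : rel T) v l (C : {set T}) : v \notin C ->
  proper_interval_on e C ->
  proper_interval_on (tail_rel e v l) [set q | prj v q \in C].
Proof.
move=> vC [a [b [h1 [h2 h3]]]].
exists (fun p => a (prj v p)), (fun p => b (prj v p)); split; [|split].
- by move=> p; rewrite inE; exact: h1.
- move=> [x|i] [y|j]; rewrite !inE /= => hx hy;
    try by rewrite (negbTE vC) in hx hy.
  move=> nxy; apply: h2 => //; apply: contra nxy => /eqP ->; exact: eqxx.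
- move=> [x|i] [y|j]; rewrite !inE /= => hx hy;
    try by rewrite (negbTE vC) in hx hy.
  exact: h3.
Qed.

Lemma side (T : finType) (e : rel T) v w (a b : T -> R) : symmetric e -> irreflexive e ->
  e v w -> (forall y, e v y -> y = w) ->
  rep e (component e v) a b -> Rlt (a w) (a v) -> Rlt (b w) (b v) ->
  forall x, x \in component e v -> x != v -> x != w -> Rlt (b x) (a v).
Proof.
move=> se ie evw uw [h1 [h2 h3]] awv bwv x.
rewrite inE => cx.
suff: x = v \/ x = w \/ Rlt (b x) (a v).
  by move=> [->|[->|//]]; rewrite eqxx.
have vC : v \in component e v by rewrite inE connect0.
apply: (conn_ind (P := fun z => z = v \/ z = w \/ Rlt (b z) (a v)) _ _ cx); first by left.
move=> y z cy eyz Py.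
have yC : y \in component e v by rewrite inE.
have zC : z \in component e v by rewrite inE (connect_trans cy (connect1 eyz)).
case: Py => [yv|Py].
  by subst y; right; left; exact: uw.
case: (eqVneq z v) => [->|zv]; first by left.
case: (eqVneq z w) => [->|zw]; first by right; left.
right; right.
have Hyb : Rle (b y) (b v) by case: Py => [->|?]; [lra | have := h1 v vC; lra].
have yz : y != z by apply: contraTneq eyz => ->; rewrite ie.
have A1 := proj1 (h2 y z yC zC yz) eyz.
have vz : v != z by rewrite eq_sym.
have A2 : ~ Rle (Rmax (a v) (a z)) (Rmin (b v) (b z)).
  by move=> H; apply: (negP zw); apply/eqP; apply: uw; exact: (proj2 (h2 v z vC zC vz) H).
rewrite RmaxminE in A1.
have := h1 v vC; have := h1 z zC => H1 H2.
case: A1 => [?[?[??]]]; apply: Rnot_le_lt => H; apply: A2; apply RmaxminE; repeat split; lra.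
Qed.

Lemma equal_case (T : finType) (e : rel T) v w (a b : T -> R) : symmetric e -> irreflexive e ->
  e v w -> (forall y, e v y -> y = w) ->
  rep e (component e v) a b -> a w = a v -> b w = b v ->
  forall x, x \in component e v -> x = v \/ x = w.
Proof.
move=> se ie evw uw [h1 [h2 h3]] awv bwv x.
rewrite inE => cx.
have vC : v \in component e v by rewrite inE connect0.
apply: (conn_ind (P := fun z => z = v \/ z = w) _ _ cx); first by left.
move=> y z cy eyz Py.
have yC : y \in component e v by rewrite inE.
have zC : z \in component e v by rewrite inE (connect_trans cy (connect1 eyz)).
case: Py => [yv|yw].
  by subst y; right; exact: uw.
subst y.
case: (eqVneq z v) => [->|zv]; first by left.
case: (eqVneq z w) => [->|zw]; first by right.
exfalso.
have yz : w != z by apply: contraTneq eyz => ->; rewrite ie.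
have A1 := proj1 (h2 w z yC zC yz) eyz.
have vz : v != z by rewrite eq_sym.
apply: (negP zw); apply/eqP; apply: uw; apply: (proj2 (h2 v z vC zC vz)).
by rewrite -awv -bwv.
Qed.

Lemma INR_ord_eq0 (n : nat) : Rle (INR n) 0 -> n = 0%N.
Proof. move=> H; have := pos_INR n => H2; apply: INR_eq; simpl; lra. Qed.

Lemma ext_proper (T : finType) (e : rel T) v l (C : {set T}) (a b : T -> R) w :
  symmetric e -> v \in C -> w \in C -> e v w -> (forall y, e v y -> y = w) -> v != w ->
  rep e C a b -> Rlt (a w) (a v) -> Rle (b w) (b v) ->
  (forall x, x \in C -> x != v -> x != w -> Rlt (b x) (a v)) ->
  proper_interval_on (tail_rel e v l) [set q | prj v q \in C].
Proof.
move=> se vC wC evw uw nvw [h1 [h2 h3]] awv bwv oth.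
have avbw : Rle (a v) (b w).
  by have := proj1 (h2 v w vC wC nvw) evw; rewrite RmaxminE; case=> [?[?[??]]].
have bc : forall y, y \in C -> y != v -> Rle (b y) (b v).
  move=> y yC yv; case: (eqVneq y w) => [->//|yw].
  by have := oth y yC yv yw; have := h1 v vC; lra.
have ac : forall y, y \in C -> y != v -> Rlt (a y) (a v).
  move=> y yC yv; case: (eqVneq y w) => [->//|yw].
  by have := oth y yC yv yw; have := h1 y yC; lra.
have avv := h1 v vC.
pose c := Rplus (b v) 1.
exists (fun p : T + 'I_l => match p with inl x => a x | inr j => Rplus c (INR j) end).
exists (fun p : T + 'I_l => match p with inl x => if x == v then c else b x
                 | inr j => Rplus (Rplus c (INR j)) 1 end).
split; [|split].
- case=> [x|j]; rewrite inE /= => hx.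
  + case: (eqVneq x v) => [->|xv]; first by rewrite /c; lra.
    exact: h1.
  + lra.
- case=> [x|i] [y|j]; rewrite !inE /= => hx hy hne; rewrite RmaxminE.
  + have xy : x != y by apply: contra hne => /eqP ->.
    case: (eqVneq x v) => [xv|xv]; case: (eqVneq y v) => [yv|yv].
    * by subst; rewrite eqxx in xy.
    * subst x; case: (eqVneq y w) => [->|yw].
        split=> _ //; have := h1 w wC; rewrite /c; repeat split; lra.
      split=> [/uw H|[?[H ?]]]; first by rewrite H eqxx in yw.
      by have := oth y hy yv yw; lra.
    * subst y; rewrite se; case: (eqVneq x w) => [->|xw].
        split=> _ //; have := h1 w wC; rewrite /c; repeat split; lra.
      split=> [/uw H|[?[?[H ?]]]]; first by rewrite H eqxx in xw.
      by have := oth x hx xv xw; lra.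
    * by rewrite -RmaxminE; exact: h2.
  + have hj := pos_INR j.
    case: (eqVneq x v) => [->|xv].
      rewrite /=; split.
        by move/eqP => ->; rewrite /c /=; repeat split; lra.
      by case=> [?[?[H ?]]]; apply/eqP; apply: INR_ord_eq0; rewrite /c in H; lra.
    split => //.
    by case=> [?[?[H ?]]]; have := bc x hx xv; rewrite /c in H; lra.
  + have hj := pos_INR i.
    case: (eqVneq y v) => [->|yv].
      rewrite /=; split.
        by move/eqP => ->; rewrite /c /=; repeat split; lra.
      by case=> [?[H ?]]; apply/eqP; apply: INR_ord_eq0; rewrite /c in H; lra.
    split => //.
    by case=> [?[H ?]]; have := bc y hy yv; rewrite /c in H; lra.
  + have ij : nat_of_ord i <> nat_of_ord j.
      by move=> h; apply: (negP hne); apply/eqP; congr inr; apply: ord_inj.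
    split.
      case/orP => /eqP h; rewrite -h S_INR; repeat split; lra.
    case=> [_ [H1 [H2 _]]].
    have K1 : (i <= S j)%coq_nat by apply: INR_le; rewrite S_INR; lra.
    have K2 : (j <= S i)%coq_nat by apply: INR_le; rewrite S_INR; lra.
    have [->|->] : (S i = j \/ S j = i) by lia.
      by rewrite eqxx.
    by rewrite eqxx orbT.
- case=> [x|i] [y|j]; rewrite !inE /= => hx hy.
  + case: (eqVneq x v) => [xv|xv]; case: (eqVneq y v) => [yv|yv].
    * by subst; move=> [_ [_ [H|H]]]; apply: H.
    * by have := bc y hy yv; rewrite /c; lra.
    * by subst y; have := ac x hx xv; have := h1 x hx; lra.
    * exact: h3.
  + have hj := pos_INR j; rewrite /c.
    case: (eqVneq x v) => [->|xv]; first lra.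
    by have := bc x hx xv; have := h1 x hx; lra.
  + have hj := pos_INR i; rewrite /c.
    case: (eqVneq y v) => [->|yv]; first lra.
    by have := bc y hy yv; lra.
  + by move=> [H1 [H2 [H|H]]]; apply: H; lra.
Qed.

Lemma proper_near (T : finType) (e : rel T) v l w : symmetric e -> irreflexive e ->
  e v w -> (forall y, e v y -> y = w) -> v != w ->
  proper_interval_on e (component e v) ->
  proper_interval_on (tail_rel e v l) [set q | prj v q \in component e v].
Proof.
move=> se ie evw uw nvw [a [b R]].
have vC : v \in component e v by rewrite inE connect0.
have wC : w \in component e v by rewrite inE connect1.
have R' : rep e (component e v) a b := R.
case: (R) => [h1 [h2 h3]].
have [avw [awb ava]] : Rle (a v) (b w) /\ Rle (a w) (b v) /\ True.
  by have := proj1 (h2 v w vC wC nvw) evw; rewrite RmaxminE; case=> [?[?[??]]].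
have P1 := h3 v w vC wC.
have P2 := h3 w v wC vC.
case: (Rtotal_order (a w) (a v)) => [lt|[eq|gt]].
- have bwv : Rlt (b w) (b v).
    apply: Rnot_le_lt => H; apply: P2; split; [lra|split; [lra|left; lra]].
  apply: (ext_proper l se vC wC evw uw nvw R' lt (Rlt_le _ _ bwv)).
  exact: (side se ie evw uw R' lt bwv).
- have bwv : b w = b v.
    case: (Rtotal_order (b w) (b v)) => [H|[H|H]] //; exfalso.
    + apply: P1; split; [lra|split; [lra|right; lra]].
    + apply: P2; split; [lra|split; [lra|right; lra]].
  have cv := equal_case se ie evw uw R' eq bwv.
  pose a0 := fun x => if x == w then R0 else R1.
  pose b0 := fun x => if x == w then R1 else Rplus R1 R1.
  have wv : w != v by rewrite eq_sym.
  apply: (@ext_proper _ e v l _ a0 b0 w se vC wC evw uw nvw).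
  + split; [|split].
    * move=> x /cv [->|->]; rewrite /a0 /b0 ?eqxx ?(negbTE nvw); lra.
    * move=> x y /cv [->|->] /cv [->|->]; rewrite ?eqxx // => _;
        rewrite /a0 /b0 ?eqxx ?(negbTE nvw) RmaxminE; split=> _;
        rewrite ?(se w v) ?evw //; repeat split; lra.
    * move=> x y /cv [->|->] /cv [->|->]; rewrite /a0 /b0 ?eqxx ?(negbTE nvw);
        move=> [?[?[H|H]]]; (try (apply: H; reflexivity)); lra.
  + rewrite /a0 eqxx (negbTE nvw); lra.
  + rewrite /b0 eqxx (negbTE nvw); lra.
  + by move=> x /cv [->|->]; rewrite eqxx.
- have bwv : Rlt (b v) (b w).
    apply: Rnot_le_lt => H; apply: P1; split; [lra|split; [lra|left; lra]].
  have Rr := rep_refl R'.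
  have lt' : Rlt (Ropp (b w)) (Ropp (b v)) by lra.
  have bt' : Rlt (Ropp (a w)) (Ropp (a v)) by lra.
  apply: (ext_proper l se vC wC evw uw nvw Rr lt' (Rlt_le _ _ bt')).
  exact: (side se ie evw uw Rr lt' bt').
Qed.

Theorem lemma10 (T : finType) (e : rel T) (v : T) (l : nat) :
  simple_graph e -> prop_int_tree e ->
  #|[set w | e v w]| = 1 -> 1 <= l ->
  simple_graph (tail_rel e v l) /\ prop_int_tree (tail_rel e v l).
Proof.
move=> sg pit card1 l1.
have [se ie] := sg.
split; first exact: tail_simple.
have /cards1P [w Hw] : #|[set w | e v w]| == 1 by rewrite card1.
have evw : e v w by have := set11 w; rewrite -Hw inE.
have uw : forall y, e v y -> y = w by move=> y evy; apply/set1P; rewrite -Hw inE.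
have nvw : v != w by apply: contraTneq evw => <-; rewrite ie.
move=> x.
case: (pit (prj v x)) => [Hp|Ht].
- left; rewrite tail_component //.
  case: (boolP (v \in component e (prj v x))) => vC.
  + have Ceq : component e (prj v x) = component e v.
      apply/setP => z; rewrite !inE; rewrite inE in vC.
      have sC := sym_connect_sym se.
      apply/idP/idP => h.
        by apply: connect_trans h; rewrite sC.
      exact: connect_trans vC h.
    rewrite Ceq in Hp *.
    exact: (proper_near l se ie evw uw nvw Hp).
  + exact: tail_proper_far.
- right; split.
  + exact: (@comp_connected _ _ x (@tail_sym _ e v l se)).
  + rewrite tail_component //; apply: tail_acyclic => //; exact: Ht.2.
Qed.
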